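(* Let $T\in B(H)$ with $T\ge0$, and let $(\lambda_k)_{k=1}^\infty\subset\operatorname{Int}_{\mathbb R}W_{\rm e}(T)$ with $(\lambda_k)_{k=1}^\infty\in\mathcal D(T)$. Then $\sum_{k=1}^\infty\lambda_k=\infty$.
   Context: $H$ is an infinite-dimensional complex separable Hilbert space. $W_{\rm e}(T)$ is the set of $\lambda\in\mathbb C$ with $\langle Tx_k,x_k\rangle\to\lambda$ for some orthonormal sequence $(x_k)$ (a subset of $\mathbb R$ for selfadjoint $T$); $\operatorname{Int}_{\mathbb R}$ is interior in $\mathbb R$. $\mathcal D(T)$ is the set of sequences $(\langle Tu_k,u_k\rangle)_{k\ge1}$ over orthonormal bases $(u_k)$ of $H$. *)

(* Defs.v *)
(* classical reals.  H is modelled concretely as l^2(N; C),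
   the (unique up to unitary isomorphism) infinite-dimensional separable
   complex Hilbert space.  Complex numbers are pairs of reals. *)
From Stdlib Require Import Reals.
Open Scope R_scope.

Definition C : Type := (R * R)%type.
Definition Cre (z : C) : R := fst z.
Definition Cim (z : C) : R := snd z.
Definition Cadd (z w : C) : C := (fst z + fst w, snd z + snd w).
Definition Cmul (z w : C) : C :=
  (fst z * fst w - snd z * snd w, fst z * snd w + snd z * fst w).
Definition Cconj (z : C) : C := (fst z, - snd z).
Definition Cnorm2 (z : C) : R := fst z * fst z + snd z * snd z.
Definition C0 : C := (0, 0).
Definition C1 : C := (1, 0).

Definition vec : Type := nat -> C.
Definition l2 (x : vec) : Prop :=
  exists s, infinite_sum (fun n => Cnorm2 (x n)) s.

Definition inner_is (x y : vec) (z : C) : Prop :=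
  infinite_sum (fun n => Cre (Cmul (x n) (Cconj (y n)))) (Cre z) /\
  infinite_sum (fun n => Cim (Cmul (x n) (Cconj (y n)))) (Cim z).

Definition bounded_operator (T : vec -> vec) : Prop :=
  (forall x, l2 x -> l2 (T x)) /\
  (forall x y, l2 x -> l2 y ->
     forall n, T (fun m => Cadd (x m) (y m)) n = Cadd (T x n) (T y n)) /\
  (forall (c : C) x, l2 x ->
     forall n, T (fun m => Cmul c (x m)) n = Cmul c (T x n)) /\
  (exists M, forall x s, infinite_sum (fun n => Cnorm2 (x n)) s ->
     forall N, sum_f_R0 (fun n => Cnorm2 (T x n)) N <= M * s).

Definition positive_operator (T : vec -> vec) : Prop :=
  forall x, l2 x -> forall z, inner_is (T x) x z -> Cim z = 0 /\ 0 <= Cre z.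

Definition orthonormal (u : nat -> vec) : Prop :=
  (forall k, l2 (u k)) /\
  (forall j k, inner_is (u j) (u k) (if Nat.eq_dec j k then C1 else C0)).

Definition orthonormal_basis (u : nat -> vec) : Prop :=
  orthonormal u /\
  (forall y, l2 y -> (forall k, inner_is y (u k) C0) -> forall n, y n = C0).

Definition Cseq_cv (a : nat -> C) (l : C) : Prop :=
  Un_cv (fun k => Cre (a k)) (Cre l) /\ Un_cv (fun k => Cim (a k)) (Cim l).

Definition essential_numerical_range (T : vec -> vec) (l : C) : Prop :=
  exists x : nat -> vec, orthonormal x /\
    exists a : nat -> C, (forall k, inner_is (T (x k)) (x k) (a k)) /\ Cseq_cv a l.

Definition real_interior (S : C -> Prop) (r : R) : Prop :=
  exists eps, 0 < eps /\ forall mu : R, Rabs (mu - r) < eps -> S (mu, 0).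

Definition diagonal_seq (T : vec -> vec) (d : nat -> C) : Prop :=
  exists u : nat -> vec, orthonormal_basis u /\
    forall k, inner_is (T (u k)) (u k) (d k).

(* Main.v *)
From Pilot Require Import Defs.
From Stdlib Require Import Arith Reals Lra Lia Psatz Classical FunctionalExtensionality.
From Coquelicot Require Import Coquelicot.
Import Pilot.Defs.
Open Scope R_scope.

Definition rip (x y : vec) (n : nat) : R := fst (x n) * fst (y n) + snd (x n) * snd (y n).
Definition ip (x y : vec) : R := Series (rip x y).
Definition vadd (x y : vec) : vec := fun m => Cadd (x m) (y m).
Definition vscal (a : R) (x : vec) : vec := fun m => Cmul (a, 0) (x m).
Definition vi (x : vec) : vec := fun m => Cmul (0, 1) (x m).
Definition vsub (x y : vec) : vec := vadd x (vscal (-1) y).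

Lemma l2_ex x : l2 x -> ex_series (fun n => Cnorm2 (x n)).
Proof. intros [s Hs]. exists s. apply is_series_Reals. exact Hs. Qed.
Lemma ex_l2 x : ex_series (fun n => Cnorm2 (x n)) -> l2 x.
Proof. intros [s Hs]; exists s; apply is_series_Reals; auto. Qed.

Lemma exR_plus (a b : nat -> R) : ex_series a -> ex_series b -> ex_series (fun n => a n + b n).
Proof. exact (@ex_series_plus R_AbsRing R_NormedModule a b). Qed.
Lemma exR_scal (c : R) (a : nat -> R) : ex_series a -> ex_series (fun n => c * a n).
Proof. exact (@ex_series_scal_l R_AbsRing R_NormedModule c a). Qed.
Lemma exR_le (a b : nat -> R) : (forall n, Rabs (a n) <= b n) -> ex_series b -> ex_series a.
Proof.
  intros H Hb. apply ex_series_Rabs.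
  apply (@ex_series_le R_AbsRing R_CompleteNormedModule _ b); auto.
  intros n. unfold norm; simpl. unfold abs; simpl. rewrite Rabs_Rabsolu. auto.
Qed.
Lemma Rabs_le2 a b : -b <= a <= b -> Rabs a <= b.
Proof. intros. unfold Rabs; destruct Rcase_abs; lra. Qed.

Lemma ex_rip x y : l2 x -> l2 y -> ex_series (rip x y).
Proof.
  intros Hx Hy.
  apply (exR_le _ (fun n => /2 * (Cnorm2 (x n) + Cnorm2 (y n)))).
  - intros n. unfold rip, Cnorm2. destruct (x n) as [a b], (y n) as [c d]; simpl.
    apply Rabs_le2; pose proof (pow2_ge_0 (a+c)); pose proof (pow2_ge_0 (a-c)); pose proof (pow2_ge_0 (b+d)); pose proof (pow2_ge_0 (b-d)); split; nra.
  - apply exR_scal. apply exR_plus; apply l2_ex; auto.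
Qed.

Ltac dd := repeat match goal with |- context [?x ?n] => match type of (x n) with (R*R)%type => destruct (x n) end end.

Lemma rip_add x y z n : rip (vadd x y) z n = rip x z n + rip y z n.
Proof. unfold rip, vadd, Cadd. destruct (x n), (y n), (z n); simpl; ring. Qed.
Lemma rip_scal a x z n : rip (vscal a x) z n = a * rip x z n.
Proof. unfold rip, vscal, Cmul. destruct (x n), (z n); simpl; ring. Qed.
Lemma rip_sym x y n : rip x y n = rip y x n.
Proof. unfold rip; ring. Qed.
Lemma rip_vi x y n : rip (vi x) (vi y) n = rip x y n.
Proof. unfold rip, vi, Cmul. destruct (x n), (y n); simpl; ring. Qed.
Lemma rip_vi2 x y n : rip (vi x) y n = - rip x (vi y) n.
Proof. unfold rip, vi, Cmul. destruct (x n), (y n); simpl; ring. Qed.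
Lemma rip_self x n : rip x x n = Cnorm2 (x n).
Proof. reflexivity. Qed.

Lemma l2_add x y : l2 x -> l2 y -> l2 (vadd x y).
Proof.
  intros Hx Hy. apply ex_l2.
  apply (exR_le _ (fun n => 2 * (Cnorm2 (x n) + Cnorm2 (y n)))).
  - intros n. unfold vadd, Cadd, Cnorm2. destruct (x n) as [a b], (y n) as [c d]; simpl.
    apply Rabs_le2. pose proof (pow2_ge_0 (a+c)); pose proof (pow2_ge_0 (a-c)); pose proof (pow2_ge_0 (b+d)); pose proof (pow2_ge_0 (b-d)); split; nra.
  - apply exR_scal. apply exR_plus; apply l2_ex; auto.
Qed.
Lemma l2_scal a x : l2 x -> l2 (vscal a x).
Proof.
  intros Hx. apply ex_l2.
  apply (ex_series_ext (fun n => (a*a) * Cnorm2 (x n))).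
  - intros n. unfold vscal, Cmul, Cnorm2. destruct (x n); simpl; ring.
  - apply exR_scal. apply l2_ex; auto.
Qed.
Lemma l2_vi x : l2 x -> l2 (vi x).
Proof.
  intros Hx. apply ex_l2.
  apply (ex_series_ext (fun n => Cnorm2 (x n))).
  - intros n. unfold vi, Cmul, Cnorm2. destruct (x n); simpl; ring.
  - apply l2_ex; auto.
Qed.
Lemma l2_sub x y : l2 x -> l2 y -> l2 (vsub x y).
Proof. intros; apply l2_add; auto; apply l2_scal; auto. Qed.

Lemma ip_add x y z : l2 x -> l2 y -> l2 z -> ip (vadd x y) z = ip x z + ip y z.
Proof.
  intros. unfold ip. rewrite <- Series_plus by (apply ex_rip; auto).
  apply Series_ext. intros; apply rip_add.
Qed.
Lemma ip_scal a x z : ip (vscal a x) z = a * ip x z.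
Proof.
  unfold ip. rewrite <- Series_scal_l. apply Series_ext. intros; apply rip_scal.
Qed.
Lemma ip_sym x y : ip x y = ip y x.
Proof. unfold ip. apply Series_ext. intros; apply rip_sym. Qed.
Lemma ip_sub x y z : l2 x -> l2 y -> l2 z -> ip (vsub x y) z = ip x z - ip y z.
Proof. intros. unfold vsub. rewrite ip_add, ip_scal; auto. ring. apply l2_scal; auto. Qed.
Lemma ip_add_r x y z : l2 x -> l2 y -> l2 z -> ip z (vadd x y) = ip z x + ip z y.
Proof. intros. rewrite !(ip_sym z). apply ip_add; auto. Qed.
Lemma ip_scal_r a x z : ip z (vscal a x) = a * ip z x.
Proof. rewrite !(ip_sym z). apply ip_scal. Qed.
Lemma ip_sub_r x y z : l2 x -> l2 y -> l2 z -> ip z (vsub x y) = ip z x - ip z y.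
Proof. intros. rewrite !(ip_sym z). apply ip_sub; auto. Qed.
Lemma ip_vi x y : ip (vi x) (vi y) = ip x y.
Proof. unfold ip. apply Series_ext. intros; apply rip_vi. Qed.
Lemma ip_vi2 x y : ip (vi x) y = - ip x (vi y).
Proof. unfold ip. rewrite <- Series_opp. apply Series_ext. intros; apply rip_vi2. Qed.
Lemma ip_vi_self x : ip x (vi x) = 0.
Proof. assert (H := ip_vi2 x x). rewrite ip_sym in H. lra. Qed.

Lemma is_ip x y : l2 x -> l2 y -> is_series (rip x y) (ip x y).
Proof. intros; apply Series_correct; apply ex_rip; auto. Qed.

Lemma partial_le a l : (forall n, 0 <= a n) -> is_series a l -> forall N, sum_f_R0 a N <= l.
Proof.
  intros Ha Hs N. apply is_series_Reals in Hs.
  apply (growing_ineq (fun N => sum_f_R0 a N)); auto.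
  intros n. simpl. specialize (Ha (S n)). lra.
Qed.
Lemma sum_nonneg a N : (forall n, 0 <= a n) -> 0 <= sum_f_R0 a N.
Proof. intros Ha; induction N; simpl; auto. specialize (Ha (S N)); lra. Qed.

Lemma Cnorm2_pos z : 0 <= Cnorm2 z.
Proof. unfold Cnorm2. destruct z; simpl; nra. Qed.
Lemma rip_self_pos x n : 0 <= rip x x n.
Proof. apply Cnorm2_pos. Qed.
Lemma coord_le x m : l2 x -> Cnorm2 (x m) <= ip x x.
Proof.
  intros Hx. assert (H := partial_le _ _ (rip_self_pos x) (is_ip x x Hx Hx) m).
  eapply Rle_trans; [|exact H].
  destruct m; simpl. apply Rle_refl.
  pose proof (sum_nonneg (rip x x) m (rip_self_pos x)). change (rip x x (S m)) with (Cnorm2 (x (S m))). lra.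
Qed.
Lemma ip_pos x : l2 x -> 0 <= ip x x.
Proof. intros Hx. pose proof (coord_le x 0 Hx). pose proof (Cnorm2_pos (x 0%nat)). lra. Qed.

Lemma quad_cs A B Cc : 0 <= Cc -> (forall t, 0 <= A - 2*t*B + t*t*Cc) -> B*B <= A*Cc.
Proof.
  intros HC H. destruct (Rle_lt_or_eq_dec 0 Cc HC) as [Hp|Hz].
  - specialize (H (B/Cc)).
    assert (E : A - 2 * (B/Cc) * B + (B/Cc)*(B/Cc)*Cc = (A*Cc - B*B)/Cc) by (field; lra).
    rewrite E in H. assert (0 <= A*Cc - B*B).
    { apply (Rmult_le_reg_r (/Cc)). apply Rinv_0_lt_compat; auto. rewrite Rmult_0_l. exact H. }
    lra.
  - subst Cc. destruct (Req_dec B 0) as [HB|HB].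
    + subst; lra.
    + exfalso. specialize (H ((A+1)/(2*B))).
      assert (E : A - 2 * ((A+1)/(2*B)) * B + (A+1)/(2*B)*((A+1)/(2*B))*0 = -1) by (field; auto).
      lra.
Qed.

Lemma ip_expand x y t : l2 x -> l2 y ->
  ip (vsub x (vscal t y)) (vsub x (vscal t y)) = ip x x - 2*t*ip x y + t*t*ip y y.
Proof.
  intros Hx Hy. assert (Hty : l2 (vscal t y)) by (apply l2_scal; auto).
  rewrite ip_sub by (auto; apply l2_sub; auto).
  rewrite !ip_sub_r by auto. rewrite !ip_scal, !ip_scal_r. rewrite (ip_sym y x). ring.
Qed.

Lemma cs x y : l2 x -> l2 y -> ip x y * ip x y <= ip x x * ip y y.
Proof.
  intros Hx Hy. apply quad_cs. apply ip_pos; auto.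
  intros t. rewrite <- ip_expand by auto. apply ip_pos. apply l2_sub; auto. apply l2_scal; auto.
Qed.

Lemma inner_terms x y n :
  Cre (Cmul (x n) (Cconj (y n))) = rip x y n /\ Cim (Cmul (x n) (Cconj (y n))) = rip x (vi y) n.
Proof. unfold Cre, Cim, Cmul, Cconj, rip, vi. destruct (x n), (y n); simpl; split; ring. Qed.

Lemma inner_ip x y z : l2 x -> l2 y -> inner_is x y z -> Cre z = ip x y /\ Cim z = ip x (vi y).
Proof.
  intros Hx Hy [H1 H2]. split.
  - apply is_series_Reals in H1. symmetry. apply is_series_unique.
    revert H1; apply is_series_ext. intros n; apply inner_terms.
  - apply is_series_Reals in H2. symmetry. apply is_series_unique.
    revert H2; apply is_series_ext. intros n; apply inner_terms.
Qed.

Lemma inner_ex x y : l2 x -> l2 y -> inner_is x y (ip x y, ip x (vi y)).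
Proof.
  intros Hx Hy. split; simpl; apply is_series_Reals.
  - apply (is_series_ext (rip x y)). intros n; symmetry; apply inner_terms. apply is_ip; auto.
  - apply (is_series_ext (rip x (vi y))). intros n; symmetry; apply inner_terms. apply is_ip; auto. apply l2_vi; auto.
Qed.

Fixpoint vsum (f : nat -> vec) (N : nat) : vec :=
  match N with O => f O | S n => vadd (vsum f n) (f (S n)) end.
Definition comb (c : nat -> R) (e : nat -> vec) (N : nat) : vec := vsum (fun j => vscal (c j) (e j)) N.
Definition ron (e : nat -> vec) : Prop :=
  (forall k, l2 (e k)) /\ (forall j k, ip (e j) (e k) = if Nat.eq_dec j k then 1 else 0).

Lemma l2_vsum f N : (forall j, l2 (f j)) -> l2 (vsum f N).
Proof. intros H; induction N; simpl; auto. apply l2_add; auto. Qed.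
Lemma ip_vsum f N z : (forall j, l2 (f j)) -> l2 z -> ip (vsum f N) z = sum_f_R0 (fun j => ip (f j) z) N.
Proof.
  intros H Hz; induction N; simpl; auto. rewrite ip_add; auto. rewrite IHN; auto. apply l2_vsum; auto.
Qed.
Lemma l2_comb c e N : ron e -> l2 (comb c e N).
Proof. intros [He _]. apply l2_vsum. intros; apply l2_scal; auto. Qed.
Lemma ip_comb c e N z : ron e -> l2 z -> ip (comb c e N) z = sum_f_R0 (fun j => c j * ip (e j) z) N.
Proof.
  intros He Hz. unfold comb. rewrite ip_vsum; auto.
  - apply sum_eq. intros; apply ip_scal.
  - intros; apply l2_scal; apply He.
Qed.
Lemma sum_delta c k N :
  sum_f_R0 (fun j => c j * (if Nat.eq_dec j k then 1 else 0)) N = if le_dec k N then c k else 0.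
Proof.
  induction N.
  - cbn [sum_f_R0]. destruct (Nat.eq_dec 0 k); destruct (le_dec k 0); subst; try lia; ring.
  - rewrite tech5, IHN. destruct (Nat.eq_dec (S N) k); destruct (le_dec k N); destruct (le_dec k (S N)); subst; try lia; ring.
Qed.
Lemma ip_comb_e c e N k : ron e -> ip (comb c e N) (e k) = if le_dec k N then c k else 0.
Proof.
  intros He. rewrite ip_comb; auto. 2: apply He. rewrite <- sum_delta. apply sum_eq.
  intros. destruct He as [_ He]. rewrite He. reflexivity.
Qed.
Lemma ip_comb_comb c e N M : ron e -> (N <= M)%nat ->
  ip (comb c e N) (comb c e M) = sum_f_R0 (fun j => c j * c j) N.
Proof.
  intros He HNM. rewrite ip_comb; auto. 2: apply l2_comb; auto. apply sum_eq. intros j Hj.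
  rewrite ip_sym, ip_comb_e; auto. destruct (le_dec j M); try lia. reflexivity.
Qed.
Lemma ip_v_comb c e N v : ron e -> l2 v -> ip v (comb c e N) = sum_f_R0 (fun j => c j * ip v (e j)) N.
Proof. intros. rewrite ip_sym, ip_comb; auto. apply sum_eq; intros; rewrite ip_sym; auto. Qed.

Definition coef (v : vec) (e : nat -> vec) (j : nat) : R := ip v (e j).

Lemma bessel_id v e N : ron e -> l2 v ->
  ip (vsub v (comb (coef v e) e N)) (vsub v (comb (coef v e) e N)) =
  ip v v - sum_f_R0 (fun j => coef v e j * coef v e j) N.
Proof.
  intros He Hv. assert (HS := l2_comb (coef v e) e N He).
  rewrite ip_sub by (auto; apply l2_sub; auto). rewrite !ip_sub_r by auto.
  rewrite (ip_sym (comb _ _ _) v). rewrite ip_v_comb by auto. rewrite ip_comb_comb by auto.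
  unfold coef. ring.
Qed.

Lemma bessel v e N : ron e -> l2 v -> sum_f_R0 (fun j => coef v e j * coef v e j) N <= ip v v.
Proof.
  intros He Hv. pose proof (bessel_id v e N He Hv).
  assert (H2 : l2 (vsub v (comb (coef v e) e N))) by (apply l2_sub; auto; apply l2_comb; auto).
  pose proof (ip_pos _ H2). lra.
Qed.

Definition ss v e N := sum_f_R0 (fun j => coef v e j * coef v e j) N.
Definition SS v e N := comb (coef v e) e N.

Lemma ss_incr v e N M : (N <= M)%nat -> ss v e N <= ss v e M.
Proof.
  intros H; induction H. lra. unfold ss in *. rewrite tech5.
  pose proof (Rle_0_sqr (coef v e (S m))). unfold Rsqr in *. lra.
Qed.

Lemma ss_tail v e : ron e -> l2 v -> forall d, 0 < d ->
  exists N0, forall N M, (N0 <= N)%nat -> (N <= M)%nat -> ss v e M - ss v e N <= d.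
Proof.
  intros He Hv d Hd.
  destruct (growing_cv (ss v e)) as [L HL].
  - intros n. apply ss_incr; lia.
  - exists (ip v v). intros x [n ->]. apply bessel; auto.
  - destruct (HL d Hd) as [N0 HN0]. exists N0. intros N M H1 H2.
    specialize (HN0 N H1). unfold Rdist in HN0.
    assert (ss v e M <= L).
    { apply (growing_ineq (ss v e)); auto. intros n; apply ss_incr; lia. }
    apply Rabs_def2 in HN0. lra.
Qed.

Lemma nrm_SS v e N M : ron e -> l2 v -> (N <= M)%nat ->
  ip (vsub (SS v e M) (SS v e N)) (vsub (SS v e M) (SS v e N)) = ss v e M - ss v e N.
Proof.
  intros He Hv H. unfold SS.
  assert (HM := l2_comb (coef v e) e M He). assert (HN := l2_comb (coef v e) e N He).
  rewrite ip_sub by (auto; apply l2_sub; auto). rewrite !ip_sub_r by auto.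
  rewrite (ip_sym (comb _ _ M) (comb _ _ N)).
  rewrite !ip_comb_comb by (auto; lia). unfold ss. ring.
Qed.

Lemma vsub_fst x y m : fst (vsub x y m) = fst (x m) - fst (y m).
Proof. unfold vsub, vadd, vscal, Cadd, Cmul. destruct (x m), (y m); simpl; ring. Qed.
Lemma vsub_snd x y m : snd (vsub x y m) = snd (x m) - snd (y m).
Proof. unfold vsub, vadd, vscal, Cadd, Cmul. destruct (x m), (y m); simpl; ring. Qed.

Lemma SS_coord v e N M m : ron e -> l2 v -> (N <= M)%nat ->
  Rsqr (fst (SS v e M m) - fst (SS v e N m)) <= ss v e M - ss v e N /\
  Rsqr (snd (SS v e M m) - snd (SS v e N m)) <= ss v e M - ss v e N.
Proof.
  intros He Hv H. rewrite <- nrm_SS by auto.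
  assert (Hl : l2 (vsub (SS v e M) (SS v e N))) by (apply l2_sub; apply l2_comb; auto).
  pose proof (coord_le _ m Hl). unfold Cnorm2 in H0. rewrite vsub_fst, vsub_snd in H0.
  pose proof (Rle_0_sqr (fst (SS v e M m) - fst (SS v e N m))).
  pose proof (Rle_0_sqr (snd (SS v e M m) - snd (SS v e N m))). unfold Rsqr in *. lra.
Qed.

Lemma sqr_small a b : 0 < b -> a * a < b * b -> Rabs a < b.
Proof. intros Hb H. unfold Rabs; destruct Rcase_abs; nra. Qed.

Lemma cauchy_lim (u : nat -> R) : ex_lim_seq_cauchy u -> is_lim_seq u (real (Lim_seq u)).
Proof.
  intros H. apply ex_lim_seq_cauchy_corr in H. destruct H as [l Hl].
  rewrite (is_lim_seq_unique _ _ Hl). exact Hl.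
Qed.

Lemma SS_cauchy v e m (p : R*R -> R) : ron e -> l2 v -> (p = fst \/ p = snd) ->
  ex_lim_seq_cauchy (fun K => p (SS v e K m)).
Proof.
  intros He Hv Hp eps.
  destruct (ss_tail v e He Hv (eps*eps/2)) as [N0 HN0].
  { pose proof (cond_pos eps). nra. }
  exists N0. intros n k Hn Hk. pose proof (cond_pos eps).
  assert (forall a b, (N0 <= a)%nat -> (a <= b)%nat -> Rabs (p (SS v e b m) - p (SS v e a m)) < eps).
  { intros a b Ha Hb. apply sqr_small; auto. specialize (HN0 a b Ha Hb).
    destruct (SS_coord v e a b m He Hv Hb) as [H1 H2]. unfold Rsqr in *.
    destruct Hp; subst; nra. }
  destruct (le_dec n k).
  - rewrite Rabs_minus_sym. apply H0; auto.
  - apply H0; auto; lia.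
Qed.

Definition Slim v e : vec := fun m =>
  (real (Lim_seq (fun K => fst (SS v e K m))), real (Lim_seq (fun K => snd (SS v e K m)))).

Lemma Slim_fst v e m : ron e -> l2 v -> is_lim_seq (fun K => fst (SS v e K m)) (fst (Slim v e m)).
Proof. intros; apply cauchy_lim. apply (SS_cauchy v e m fst); auto. Qed.
Lemma Slim_snd v e m : ron e -> l2 v -> is_lim_seq (fun K => snd (SS v e K m)) (snd (Slim v e m)).
Proof. intros; apply cauchy_lim. apply (SS_cauchy v e m snd); auto. Qed.

Lemma Cnorm2_vsub x y m : Cnorm2 (vsub x y m) =
  (fst (x m) - fst (y m)) * (fst (x m) - fst (y m)) + (snd (x m) - snd (y m)) * (snd (x m) - snd (y m)).
Proof. unfold Cnorm2. rewrite vsub_fst, vsub_snd. reflexivity. Qed.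

Lemma trunc_lim v e N P : ron e -> l2 v ->
  is_lim_seq (fun M => sum_f_R0 (fun m => Cnorm2 (vsub (SS v e M) (SS v e N) m)) P)
             (sum_f_R0 (fun m => Cnorm2 (vsub (Slim v e) (SS v e N) m)) P).
Proof.
  intros He Hv.
  assert (Hterm : forall m, is_lim_seq (fun M => Cnorm2 (vsub (SS v e M) (SS v e N) m))
                                       (Cnorm2 (vsub (Slim v e) (SS v e N) m))).
  { intros m. rewrite Cnorm2_vsub.
    apply (is_lim_seq_ext (fun M => (fst (SS v e M m) - fst (SS v e N m)) * (fst (SS v e M m) - fst (SS v e N m)) + (snd (SS v e M m) - snd (SS v e N m)) * (snd (SS v e M m) - snd (SS v e N m)))).
    { intros; rewrite Cnorm2_vsub; reflexivity. }
    assert (H1 := is_lim_seq_minus' _ _ _ _ (Slim_fst v e m He Hv) (is_lim_seq_const (fst (SS v e N m)))).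
    assert (H2 := is_lim_seq_minus' _ _ _ _ (Slim_snd v e m He Hv) (is_lim_seq_const (snd (SS v e N m)))).
    exact (is_lim_seq_plus' _ _ _ _ (is_lim_seq_mult' _ _ _ _ H1 H1) (is_lim_seq_mult' _ _ _ _ H2 H2)). }
  induction P.
  - apply Hterm.
  - apply (is_lim_seq_ext (fun M => sum_f_R0 (fun m => Cnorm2 (vsub (SS v e M) (SS v e N) m)) P + Cnorm2 (vsub (SS v e M) (SS v e N) (S P)))).
    { intros; rewrite tech5; reflexivity. }
    rewrite tech5. apply is_lim_seq_plus'; auto.
Qed.

Lemma trunc_bound v e N d : ron e -> l2 v ->
  (forall M, (N <= M)%nat -> ss v e M - ss v e N <= d) ->
  forall P, sum_f_R0 (fun m => Cnorm2 (vsub (Slim v e) (SS v e N) m)) P <= d.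
Proof.
  intros He Hv Hd P.
  assert (H := trunc_lim v e N P He Hv).
  apply (is_lim_seq_incr_n _ N) in H.
  assert (Hc := is_lim_seq_const d).
  assert (Hle : forall k, sum_f_R0 (fun m => Cnorm2 (vsub (SS v e (k + N)) (SS v e N) m)) P <= d).
  { intros k. assert (Hl : l2 (vsub (SS v e (k+N)) (SS v e N))) by (apply l2_sub; apply l2_comb; auto).
    eapply Rle_trans. apply (partial_le _ _ (rip_self_pos _) (is_ip _ _ Hl Hl)).
    rewrite nrm_SS by (auto; lia). apply Hd; lia. }
  exact (is_lim_seq_le _ _ _ _ Hle H Hc).
Qed.

Lemma bounded_series a d : (forall n, 0 <= a n) -> (forall P, sum_f_R0 a P <= d) ->
  exists L, infinite_sum a L /\ L <= d.
Proof.
  intros Ha Hd. destruct (growing_cv (sum_f_R0 a)) as [L HL].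
  - intros n; simpl. specialize (Ha (S n)); lra.
  - exists d. intros x [n ->]. auto.
  - exists L. split; auto.
    assert (H1 : is_lim_seq (sum_f_R0 a) L) by (apply is_lim_seq_Reals; auto).
    exact (is_lim_seq_le _ _ _ _ Hd H1 (is_lim_seq_const d)).
Qed.

Lemma tail_l2 v e N d : ron e -> l2 v ->
  (forall M, (N <= M)%nat -> ss v e M - ss v e N <= d) ->
  l2 (vsub (Slim v e) (SS v e N)) /\
  ip (vsub (Slim v e) (SS v e N)) (vsub (Slim v e) (SS v e N)) <= d.
Proof.
  intros He Hv Hd.
  destruct (bounded_series (fun m => Cnorm2 (vsub (Slim v e) (SS v e N) m)) d) as [L [HL HLd]].
  - intros; apply Cnorm2_pos.
  - apply trunc_bound; auto.
  - assert (Hl : l2 (vsub (Slim v e) (SS v e N))) by (exists L; auto).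
    split; auto. unfold ip. rewrite (is_series_unique _ L); auto.
    apply is_series_Reals. exact HL.
Qed.

Definition complete_fam (e : nat -> vec) : Prop :=
  forall y, l2 y -> (forall k, ip y (e k) = 0) -> forall n, y n = (0, 0).

Lemma small_sq_zero x : (forall d, 0 < d -> x * x <= d) -> x = 0.
Proof.
  intros H. destruct (Req_dec x 0); auto. exfalso.
  assert (0 < x * x) by (apply Rsqr_pos_lt in H0; unfold Rsqr in H0; auto).
  specialize (H (x*x/2)). lra.
Qed.

Lemma tail_ex v e : ron e -> l2 v -> forall d, 0 < d ->
  exists N0, forall N, (N0 <= N)%nat -> forall M, (N <= M)%nat -> ss v e M - ss v e N <= d.
Proof.
  intros He Hv d Hd. destruct (ss_tail v e He Hv d Hd) as [N0 H]. exists N0. intros; apply H; lia.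
Qed.

Lemma Slim_decomp v e N : Slim v e = vadd (vsub (Slim v e) (SS v e N)) (SS v e N).
Proof.
  generalize (Slim v e). intros S.
  apply functional_extensionality. intros m. unfold vadd, vsub, vscal, Cadd, Cmul.
  apply injective_projections; simpl; ring.
Qed.

Lemma l2_Slim v e : ron e -> l2 v -> l2 (Slim v e).
Proof.
  intros He Hv. destruct (tail_ex v e He Hv 1 Rlt_0_1) as [N0 H].
  destruct (tail_l2 v e N0 1 He Hv (H N0 (le_n _))) as [Hl _].
  rewrite (Slim_decomp v e N0). apply l2_add; auto. apply l2_comb; auto.
Qed.

Lemma Slim_eq v e : ron e -> complete_fam e -> l2 v -> Slim v e = v.
Proof.
  intros He Hc Hv. assert (HS := l2_Slim v e He Hv).
  assert (Hw : forall n, vsub v (Slim v e) n = (0,0)).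
  { apply Hc. apply l2_sub; auto. intros k. apply small_sq_zero. intros d Hd.
    destruct (tail_ex v e He Hv d Hd) as [N0 H].
    set (N := Nat.max N0 k).
    destruct (tail_l2 v e N d He Hv (H N (Nat.le_max_l _ _))) as [HD HDd].
    assert (Hek : l2 (e k)) by apply He.
    assert (E : ip (vsub v (Slim v e)) (e k) = - ip (vsub (Slim v e) (SS v e N)) (e k)).
    { rewrite ip_sub by auto. rewrite (Slim_decomp v e N) at 1. rewrite ip_add; auto.
      2: apply l2_comb; auto. unfold SS. rewrite ip_comb_e by auto.
      destruct (le_dec k N); [|lia]. unfold coef. ring. }
    rewrite E. pose proof (cs _ _ HD Hek).
    destruct He as [_ He']. rewrite He' in H0. destruct (Nat.eq_dec k k); [|lia].
    nra. }
  apply functional_extensionality. intros m. specialize (Hw m).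
  unfold vsub, vadd, vscal, Cadd, Cmul in Hw. destruct (Slim v e m), (v m); simpl in Hw.
  injection Hw; intros. f_equal; lra.
Qed.

Lemma parseval v e : ron e -> complete_fam e -> l2 v -> forall d, 0 < d ->
  exists N, ip v v <= ss v e N + d.
Proof.
  intros He Hc Hv d Hd. destruct (tail_ex v e He Hv d Hd) as [N0 H].
  exists N0. destruct (tail_l2 v e N0 d He Hv (H N0 (le_n _))) as [_ HD].
  rewrite (Slim_eq v e He Hc Hv) in HD. unfold SS in HD. rewrite bessel_id in HD by auto.
  unfold ss. lra.
Qed.

Lemma T_add T : bounded_operator T -> forall x y, l2 x -> l2 y -> T (vadd x y) = vadd (T x) (T y).
Proof. intros [_ [H _]] x y Hx Hy. apply functional_extensionality. intros n. apply H; auto. Qed.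
Lemma T_scal T : bounded_operator T -> forall a x, l2 x -> T (vscal a x) = vscal a (T x).
Proof. intros [_ [_ [H _]]] a x Hx. apply functional_extensionality. intros n. apply H; auto. Qed.
Lemma T_vi T : bounded_operator T -> forall x, l2 x -> T (vi x) = vi (T x).
Proof. intros [_ [_ [H _]]] x Hx. apply functional_extensionality. intros n. apply H; auto. Qed.
Lemma T_l2 T : bounded_operator T -> forall x, l2 x -> l2 (T x).
Proof. intros [H _]; auto. Qed.
Lemma T_sub T : bounded_operator T -> forall x y, l2 x -> l2 y -> T (vsub x y) = vsub (T x) (T y).
Proof.
  intros HT x y Hx Hy. unfold vsub. rewrite T_add; auto. rewrite T_scal; auto. apply l2_scal; auto.
Qed.

Lemma T_pos T : bounded_operator T -> positive_operator T -> forall x, l2 x ->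
  0 <= ip (T x) x /\ ip (T x) (vi x) = 0.
Proof.
  intros HT HP x Hx. destruct (HP x Hx _ (inner_ex _ _ (T_l2 T HT x Hx) Hx)) as [H1 H2].
  simpl in *. split; auto.
Qed.

Lemma vi_add x y : vi (vadd x y) = vadd (vi x) (vi y).
Proof. apply functional_extensionality; intros m. unfold vi, vadd, Cadd, Cmul. destruct (x m), (y m); simpl. f_equal; ring. Qed.
Lemma vi_vi x : vi (vi x) = vscal (-1) x.
Proof. apply functional_extensionality; intros m. unfold vi, vscal, Cmul. destruct (x m); simpl. f_equal; ring. Qed.

Lemma T_sym T : bounded_operator T -> positive_operator T -> forall x y, l2 x -> l2 y ->
  ip (T x) y = ip (T y) x.
Proof.
  intros HT HP.
  assert (Hs : forall x y, l2 x -> l2 y -> ip (T x) (vi y) + ip (T y) (vi x) = 0).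
  { intros x y Hx Hy. pose proof (proj2 (T_pos T HT HP _ (l2_add _ _ Hx Hy))) as H.
    rewrite T_add, vi_add in H by auto.
    assert (HTx := T_l2 T HT x Hx). assert (HTy := T_l2 T HT y Hy).
    assert (Hix := l2_vi x Hx). assert (Hiy := l2_vi y Hy).
    rewrite ip_add in H by (auto; apply l2_add; auto). rewrite !ip_add_r in H by auto.
    pose proof (proj2 (T_pos T HT HP _ Hx)). pose proof (proj2 (T_pos T HT HP _ Hy)). lra. }
  intros x y Hx Hy. assert (Hiy := l2_vi y Hy).
  pose proof (Hs x (vi y) Hx Hiy) as H. rewrite vi_vi, ip_scal_r, T_vi, ip_vi in H by auto. lra.
Qed.

Lemma T_cs T : bounded_operator T -> positive_operator T -> forall x y, l2 x -> l2 y ->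
  ip (T x) y * ip (T x) y <= ip (T x) x * ip (T y) y.
Proof.
  intros HT HP x y Hx Hy. apply quad_cs. apply T_pos; auto.
  intros t. assert (Hty : l2 (vscal t y)) by (apply l2_scal; auto).
  assert (Hz : l2 (vsub x (vscal t y))) by (apply l2_sub; auto).
  pose proof (proj1 (T_pos T HT HP _ Hz)) as H.
  assert (HTx := T_l2 T HT x Hx). assert (HTy := T_l2 T HT y Hy).
  rewrite T_sub, T_scal in H by auto.
  rewrite ip_sub in H by (auto; try apply l2_scal; auto).
  rewrite !ip_sub_r in H by (auto; try apply l2_scal; auto).
  rewrite !ip_scal, !ip_scal_r in H. rewrite (T_sym T HT HP y x) in H by auto. lra.
Qed.

Lemma par k : (Nat.even k = true /\ k = (2 * Nat.div2 k)%nat) \/ (Nat.even k = false /\ k = S (2 * Nat.div2 k)%nat).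
Proof.
  destruct (Nat.Even_or_Odd k) as [[m ->]|[m ->]].
  - left. rewrite Nat.div2_double. split; auto. rewrite Nat.even_mul. reflexivity.
  - right. rewrite Nat.add_1_r, Nat.div2_succ_double. split; auto. rewrite Nat.even_succ, Nat.odd_mul. reflexivity.
Qed.

Definition rb (u : nat -> vec) (k : nat) : vec :=
  if Nat.even k then u (Nat.div2 k) else vi (u (Nat.div2 k)).

Lemma cortho u : orthonormal u -> forall j k,
  ip (u j) (u k) = (if Nat.eq_dec j k then 1 else 0) /\ ip (u j) (vi (u k)) = 0.
Proof.
  intros [Hl Ho] j k. destruct (inner_ip _ _ _ (Hl j) (Hl k) (Ho j k)) as [H1 H2].
  destruct (Nat.eq_dec j k); simpl in *; split; auto.
Qed.

Lemma rb_ron u : orthonormal u -> ron (rb u).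
Proof.
  intros Hu. split.
  - intros k. unfold rb. destruct (Nat.even k); [|apply l2_vi]; apply Hu.
  - intros j k. unfold rb.
    destruct (par j) as [[Hj Ej]|[Hj Ej]]; destruct (par k) as [[Hk Ek]|[Hk Ek]]; rewrite Hj, Hk.
    + destruct (cortho u Hu (Nat.div2 j) (Nat.div2 k)) as [H _]. rewrite H.
      destruct (Nat.eq_dec (Nat.div2 j) (Nat.div2 k)); destruct (Nat.eq_dec j k); auto; lia.
    + destruct (cortho u Hu (Nat.div2 j) (Nat.div2 k)) as [_ H]. rewrite H.
      destruct (Nat.eq_dec j k); auto; lia.
    + rewrite ip_vi2. destruct (cortho u Hu (Nat.div2 j) (Nat.div2 k)) as [_ H]. rewrite H.
      destruct (Nat.eq_dec j k); try lia. ring.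
    + rewrite ip_vi. destruct (cortho u Hu (Nat.div2 j) (Nat.div2 k)) as [H _]. rewrite H.
      destruct (Nat.eq_dec (Nat.div2 j) (Nat.div2 k)); destruct (Nat.eq_dec j k); auto; lia.
Qed.

Lemma rb_complete u : orthonormal_basis u -> complete_fam (rb u).
Proof.
  intros [Hu Hc] y Hy Hk. apply Hc; auto. intros k.
  assert (E1 : ip y (u k) = 0).
  { specialize (Hk (2 * k)%nat). unfold rb in Hk.
    rewrite Nat.even_mul, Nat.div2_double in Hk. simpl in Hk. exact Hk. }
  assert (E2 : ip y (vi (u k)) = 0).
  { specialize (Hk (S (2 * k))%nat). unfold rb in Hk.
    rewrite Nat.even_succ, Nat.odd_mul, Nat.div2_succ_double in Hk. simpl in Hk. exact Hk. }
  pose proof (inner_ex y (u k) Hy (proj1 Hu k)) as H. rewrite E1, E2 in H. exact H.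
Qed.

Lemma rb_diag T u : bounded_operator T -> orthonormal u -> forall k,
  ip (T (rb u k)) (rb u k) = ip (T (u (Nat.div2 k))) (u (Nat.div2 k)).
Proof.
  intros HT Hu k. unfold rb. destruct (Nat.even k); auto.
  rewrite (T_vi T HT) by apply Hu. apply ip_vi.
Qed.

Lemma sum_double (mu lam : nat -> R) : (forall k, mu k = lam (Nat.div2 k)) ->
  forall N, sum_f_R0 mu (S (2 * N)%nat) = 2 * sum_f_R0 lam N.
Proof.
  intros H N. induction N.
  - simpl. rewrite !H. simpl. ring.
  - replace (S (2 * S N)%nat) with (S (S (S (2 * N)%nat))) by lia.
    rewrite tech5, tech5, IHN, tech5.
    rewrite (H (S (S (2 * N)%nat))), (H (S (S (S (2 * N)%nat)))).
    replace (S (S (2 * N)%nat)) with (2 * S N)%nat by lia. rewrite Nat.div2_double.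
    rewrite Nat.div2_succ_double. ring.
Qed.

Lemma sum_mono a N M : (forall n, 0 <= a n) -> (N <= M)%nat -> sum_f_R0 a N <= sum_f_R0 a M.
Proof. intros Ha H; induction H. lra. rewrite tech5. specialize (Ha (S m)). lra. Qed.

Lemma tail_small a B : (forall n, 0 <= a n) -> (forall N, sum_f_R0 a N <= B) ->
  forall d, 0 < d -> exists K, forall N, (K <= N)%nat -> sum_f_R0 a N - sum_f_R0 a K <= d.
Proof.
  intros Ha HB d Hd. destruct (bounded_series a B Ha HB) as [L [HL _]].
  destruct (HL d Hd) as [K HK]. exists K. intros N HN.
  assert (sum_f_R0 a N <= L).
  { apply (growing_ineq (sum_f_R0 a)); auto. intros n; simpl; specialize (Ha (S n)); lra. }
  specialize (HK K (le_n _)). unfold Rdist in HK. apply Rabs_def2 in HK. lra.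
Qed.

Lemma sum_diff_le f g K M : (K <= M)%nat -> (forall n, f n <= g n) ->
  sum_f_R0 f M - sum_f_R0 f K <= sum_f_R0 g M - sum_f_R0 g K.
Proof. intros H Hfg; induction H. lra. rewrite !tech5. specialize (Hfg (S m)). lra. Qed.

Lemma terms_to_0 a B : (forall n, 0 <= a n) -> (forall N, sum_f_R0 a N <= B) -> is_lim_seq a 0.
Proof.
  intros Ha HB. destruct (bounded_series a B Ha HB) as [L [HL _]].
  apply ex_series_lim_0. exists L. apply is_series_Reals. auto.
Qed.

Lemma le_eps a b : (forall d, 0 < d -> a <= b + d) -> a <= b.
Proof.
  intros H. destruct (Rle_lt_dec a b); auto. specialize (H ((a - b)/2)). lra.
Qed.

Lemma not_cv_bounded (s : nat -> R) : (forall n, s n <= s (S n)) -> ~ cv_infty s -> exists B, forall N, s N <= B.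
Proof.
  intros Hinc Hn. apply NNPP. intros Hb. apply Hn. intros M.
  apply NNPP. intros HM. apply Hb. exists M. intros N. apply Rnot_lt_le. intros HN.
  apply HM. exists N. intros n Hn'. induction Hn'. auto. specialize (Hinc m). lra.
Qed.

Theorem proposition4p6 :
  forall (T : vec -> vec),
    bounded_operator T ->
    positive_operator T ->
    forall lam : nat -> R,
      (forall k, real_interior (essential_numerical_range T) (lam k)) ->
      diagonal_seq T (fun k => (lam k, 0)) ->
      cv_infty (fun n => sum_f_R0 lam n).
Proof.
  intros T HT HP lam Hint [u [Hu Hd]].
  assert (Hul : forall k, l2 (u k)) by apply (proj1 (proj1 Hu)).
  assert (Hlam : forall k, lam k = ip (T (u k)) (u k)).
  { intros k. exact (proj1 (inner_ip _ _ _ (T_l2 T HT _ (Hul k)) (Hul k) (Hd k))). }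
  assert (Hlam0 : forall k, 0 <= lam k).
  { intros k. rewrite Hlam. apply T_pos; auto. }
  set (e := rb u).
  assert (He : ron e) by (apply rb_ron; apply Hu).
  assert (Hc : complete_fam e) by (apply rb_complete; auto).
  assert (Hel : forall k, l2 (e k)) by apply He.
  set (mu := fun k => ip (T (e k)) (e k)).
  assert (Hmu : forall k, mu k = lam (Nat.div2 k)).
  { intros k. unfold mu, e. rewrite rb_diag; auto. apply Hu. }
  assert (Hmu0 : forall k, 0 <= mu k) by (intros; rewrite Hmu; auto).
  destruct (Hint 0%nat) as [eps [Heps Hball]].
  set (c := lam 0%nat + eps / 2).
  assert (Hcpos : 0 < c) by (unfold c; specialize (Hlam0 0%nat); lra).
  destruct (Hball c) as [x [Hx [a [Ha Hcv]]]].
  { unfold c. rewrite Rabs_right; lra. }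
  assert (Hxl : forall n, l2 (x n)) by apply (proj1 Hx).
  assert (Hxr : ron x).
  { split; auto. intros j k. apply (cortho x Hx). }
  set (t := fun n => ip (T (x n)) (x n)).
  assert (Ht : is_lim_seq t c).
  { apply (is_lim_seq_ext (fun k => Cre (a k))).
    - intros n. exact (proj1 (inner_ip _ _ _ (T_l2 T HT _ (Hxl n)) (Hxl n) (Ha n))).
    - apply is_lim_seq_Reals. exact (proj1 Hcv). }
  assert (Ht0 : forall n, 0 <= t n) by (intros; apply T_pos; auto).
  destruct (classic (cv_infty (fun n => sum_f_R0 lam n))) as [Hcv'|Hncv]; auto. exfalso.
  destruct (not_cv_bounded _ (fun n => sum_mono lam n (S n) Hlam0 (le_S _ _ (le_n n))) Hncv) as [B HB].
  assert (HBmu : forall N, sum_f_R0 mu N <= 2 * B).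
  { intros N. eapply Rle_trans. apply (sum_mono mu N (S (2 * N)%nat)); auto; lia.
    rewrite (sum_double mu lam Hmu). specialize (HB N). lra. }
  destruct (tail_small mu (2 * B) Hmu0 HBmu (c/4)) as [K HK]. { lra. }
  assert (Key : forall n, ip (T (x n)) (T (x n)) <=
            sum_f_R0 (fun k => coef (T (x n)) e k * coef (T (x n)) e k) K + t n * (c/4)).
  { intros n. assert (Hv : l2 (T (x n))) by (apply T_l2; auto).
    apply le_eps. intros d Hdd. destruct (parseval (T (x n)) e He Hc Hv d Hdd) as [N HN].
    assert (H1 := ss_incr (T (x n)) e N (Nat.max N K) (Nat.le_max_l _ _)).
    assert (H2 := sum_diff_le (fun k => coef (T (x n)) e k * coef (T (x n)) e k)
                    (fun k => mu k * t n) K (Nat.max N K) (Nat.le_max_r _ _)).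
    assert (H3 : forall k, coef (T (x n)) e k * coef (T (x n)) e k <= mu k * t n).
    { intros k. rewrite (Rmult_comm (mu k)). unfold coef, mu, t. apply T_cs; auto. }
    specialize (H2 H3). rewrite <- !scal_sum in H2.
    specialize (HK (Nat.max N K) (Nat.le_max_r _ _)).
    specialize (Ht0 n). unfold ss in H1.
    assert (t n * (sum_f_R0 mu (Nat.max N K) - sum_f_R0 mu K) <= t n * (c/4)).
    { apply Rmult_le_compat_l; auto. }
    unfold ss in HN. nra. }
  assert (Tt : forall n, t n * t n <= ip (T (x n)) (T (x n))).
  { intros n. pose proof (cs (T (x n)) (x n) (T_l2 T HT _ (Hxl n)) (Hxl n)) as H.
    destruct Hxr as [_ Ho]. rewrite Ho in H. destruct (Nat.eq_dec n n); [|lia].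
    unfold t. lra. }
  assert (HF : forall K', is_lim_seq (fun n => sum_f_R0 (fun k => coef (T (x n)) e k * coef (T (x n)) e k) K') 0).
  { assert (Hterm : forall k, is_lim_seq (fun n => coef (T (x n)) e k * coef (T (x n)) e k) 0).
    { intros k. apply (is_lim_seq_ext (fun n => coef (T (e k)) x n * coef (T (e k)) x n)).
      - intros n. unfold coef. rewrite (T_sym T HT HP (e k) (x n)); auto.
      - apply (terms_to_0 _ (ip (T (e k)) (T (e k)))).
        + intros; apply Rle_0_sqr.
        + intros N. apply bessel; auto. apply T_l2; auto. }
    intros K'. induction K'.
    - apply Hterm.
    - apply (is_lim_seq_ext (fun n => sum_f_R0 (fun k => coef (T (x n)) e k * coef (T (x n)) e k) K' + coef (T (x n)) e (S K') * coef (T (x n)) e (S K'))).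
      + intros n. rewrite tech5. reflexivity.
      + rewrite <- (Rplus_0_r 0). exact (is_lim_seq_plus' _ _ _ _ IHK' (Hterm (S K'))). }
  specialize (HF K). apply is_lim_seq_Reals in HF. apply is_lim_seq_Reals in Ht.
  destruct (HF (c*c/8)) as [N1 HN1]. { nra. }
  destruct (Ht (c/4)) as [N2 HN2]. { lra. }
  set (n := Nat.max N1 N2).
  specialize (HN1 n (Nat.le_max_l _ _)). specialize (HN2 n (Nat.le_max_r _ _)).
  unfold Rdist in HN1, HN2. apply Rabs_def2 in HN1. apply Rabs_def2 in HN2.
  specialize (Key n). specialize (Tt n). nra.
Qed.
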